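(* Let $G$ be a group, let $K$ be an uncountable algebraically closed field, and let $A$ be an affine algebraic set over $K$. Then every bijective algebraic cellular automaton $\tau\colon A^G\to A^G$ is reversible, i.e., its inverse map $\tau^{-1}\colon A^G\to A^G$ is also a cellular automaton.
   Context: For a group $G$ and a set $A$, $A^G$ is the set of maps $x\colon G\to A$, with the $G$-shift $(gx)(h)=x(g^{-1}h)$. A cellular automaton is a map $\tau\colon A^G\to A^G$ for which there exist a finite subset $M\subset G$ (memory set) and a map $\mu\colon A^M\to A$ (local defining map) with $\tau(x)(g)=\mu((g^{-1}x)|_M)$ for all $x\in A^G$, $g\in G$. A cellular automaton is reversible if it is bijective and its inverse is a cellular automaton. An affine algebraic set over a field $K$ is the common zero set in some $K^m$ of a set of polynomials; a map between affine algebraic sets is regular if it is the restriction of a polynomial map. A cellular automaton $\tau\colon A^G\to A^G$ with $A$ an affine algebraic set over $K$ is algebraic if for some (equivalently any) memory set $M$ the local defining map $\mu\colon A^M\to A$ is regular ($A^M$ being viewed as an affine algebraic set). *)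

(* Defs.v *)
From HB Require Import structures.
From mathcomp Require Import all_boot all_order all_algebra.
Set Implicit Arguments. Unset Strict Implicit. Unset Printing Implicit Defensive.
Import GRing.Theory.
Local Open Scope ring_scope.

Record group := Group {
  gcar :> Type;
  gmul : gcar -> gcar -> gcar;
  gone : gcar;
  ginv : gcar -> gcar;
  gmulA : forall a b c, gmul a (gmul b c) = gmul (gmul a b) c;
  gmul1l : forall a, gmul gone a = a;
  gmul1r : forall a, gmul a gone = a;
  gmulVl : forall a, gmul (ginv a) a = gone;
  gmulVr : forall a, gmul a (ginv a) = gone }.

Inductive pexpr (K : Type) (V : Type) : Type :=
  | PVar of V
  | PConst of K
  | PAdd of pexpr K V & pexpr K V
  | PMul of pexpr K V & pexpr K V.
Arguments PVar {K V}. Arguments PConst {K V}.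

Fixpoint peval (K : nzRingType) (V : Type) (p : pexpr K V) (v : V -> K) : K :=
  match p with
  | PVar i => v i
  | PConst c => c
  | PAdd p q => peval p v + peval q v
  | PMul p q => peval p v * peval q v
  end.

Definition aff_set (K : nzRingType) (m : nat) (S : pexpr K 'I_m -> Prop) :=
  {v : 'I_m -> K | forall p, S p -> peval p v = 0}.

(* ---------- Cellular automata ----------
   A^G = G -> A, and (g^{-1} x)(h) = x(g h).  A finite memory set M is given
   as a finite family M : 'I_k -> G, and A^M is identified with 'I_k -> A. *)
Definition restr_shift (G : group) (A : Type) (k : nat) (M : 'I_k -> G)
  (x : G -> A) (g : G) : 'I_k -> A := fun i => x (gmul g (M i)).

Definition local_rule (G : group) (A : Type) (tau : (G -> A) -> (G -> A))
  (k : nat) (M : 'I_k -> G) (mu : ('I_k -> A) -> A) : Prop :=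
  forall x g, tau x g = mu (restr_shift M x g).

Definition is_CA (G : group) (A : Type) (tau : (G -> A) -> (G -> A)) : Prop :=
  exists k (M : 'I_k -> G) (mu : ('I_k -> A) -> A), local_rule tau M mu.

Definition reversible (G : group) (A : Type) (tau : (G -> A) -> (G -> A)) : Prop :=
  bijective tau /\ exists sigma, cancel tau sigma /\ cancel sigma tau /\ is_CA sigma.

(* A^M, with A in K^m, is viewed as an affine algebraic set in K^(k*m), the
   coordinates being indexed by 'I_k * 'I_m. *)
Definition regular_local (K : nzRingType) (m : nat) (S : pexpr K 'I_m -> Prop)
  (k : nat) (mu : ('I_k -> aff_set S) -> aff_set S) : Prop :=
  exists F : 'I_m -> pexpr K ('I_k * 'I_m),
    forall (u : 'I_k -> aff_set S) (j : 'I_m),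
      proj1_sig (mu u) j = peval (F j) (fun ij => proj1_sig (u ij.1) ij.2).

Definition algebraic_CA (K : nzRingType) (m : nat) (S : pexpr K 'I_m -> Prop)
  (G : group) (tau : (G -> aff_set S) -> (G -> aff_set S)) : Prop :=
  exists k (M : 'I_k -> G) (mu : ('I_k -> aff_set S) -> aff_set S),
    local_rule tau M mu /\ regular_local mu.

Definition uncountable (T : Type) : Prop :=
  ~ exists f : T -> nat, injective f.

(* Main.v *)
Require Import Defs.
From Stdlib Require Import Classical ClassicalEpsilon Lia FunctionalExtensionality ProofIrrelevance.
From HB Require Import structures.
From mathcomp Require Import all_boot all_order all_algebra all_field.
Set Implicit Arguments. Unset Strict Implicit. Unset Printing Implicit Defensive.
Import GRing.Theory.
Local Open Scope ring_scope.

Section Sec_H1.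

Lemma ar1 s d j : (s <= d -> d <= j -> s <= j - (d - s))%N.
Proof. move=> /leP h1 /leP h2; apply/leP; rewrite -!minusE; lia. Qed.
Lemma ar2 s d : (0 < s -> s <= d -> d - s <= d.-1)%N.
Proof. move=> /leP h1 /leP h2; apply/leP; rewrite -!minusE -!subn1 -!minusE; lia. Qed.
Lemma ar3 s d : (0 < s -> s <= d -> d.-1 - (d - s) = s.-1)%N.
Proof. move=> /leP h1 /leP h2; rewrite -!subn1 -!minusE; lia. Qed.

Definition pickf (T : Type) (P : T -> Prop) (d : T) : T :=
  match excluded_middle_informative (exists x, P x) with
  | left h => proj1_sig (constructive_indefinite_description _ h)
  | right _ => d end.

Lemma pickfP (T : Type) (P : T -> Prop) (d : T) : (exists x, P x) -> P (pickf P d).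
Proof.
move=> h; rewrite /pickf; case: excluded_middle_informative => // h'.
exact: proj2_sig.
Qed.

Inductive in_ideal (R : nzRingType) (l : seq R) : R -> Prop :=
| II0 : in_ideal l 0
| IIgen i : (i < size l)%N -> in_ideal l l`_i
| IIadd x y : in_ideal l x -> in_ideal l y -> in_ideal l (x + y)
| IImul r x : in_ideal l x -> in_ideal l (r * x).

Lemma in_ideal_trans (R : nzRingType) (l l' : seq R) x :
  (forall i, (i < size l)%N -> in_ideal l' l`_i) -> in_ideal l x -> in_ideal l' x.
Proof.
move=> H; elim=> [|i Hi|a b _ Ha _ Hb|r a _ Ha]; first exact: II0.
- exact: H.
- exact: IIadd.
- exact: IImul.
Qed.

Lemma in_ideal_opp (R : nzRingType) (l : seq R) x : in_ideal l x -> in_ideal l (- x).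
Proof. by move=> h; rewrite -mulN1r; apply: IImul. Qed.

Lemma in_ideal_sub (R : nzRingType) (l : seq R) x y :
  in_ideal l x -> in_ideal l y -> in_ideal l (x - y).
Proof. by move=> hx hy; apply: IIadd => //; apply: in_ideal_opp. Qed.

Lemma in_ideal_mkseq (R : nzRingType) (f : nat -> R) n n' x :
  (n <= n')%N -> in_ideal (mkseq f n) x -> in_ideal (mkseq f n') x.
Proof.
move=> le; apply: in_ideal_trans => i; rewrite size_mkseq => lt.
rewrite nth_mkseq //.
have lt' : (i < n')%N by apply: leq_trans lt le.
by rewrite -(nth_mkseq 0 f lt'); apply: IIgen; rewrite size_mkseq.
Qed.

Definition Noeth (R : nzRingType) :=
  forall f : nat -> R, exists N, in_ideal (mkseq f N) (f N).

Lemma Noeth_field (F : fieldType) : Noeth F.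
Proof.
move=> f.
case: (classic (exists n, f n != 0)) => [[n hn]|h].
  exists n.+1.
  have -> : f n.+1 = (f n.+1 / f n) * (mkseq f n.+1)`_n.
    by rewrite nth_mkseq // mulfVK.
  by apply: IImul; apply: IIgen; rewrite size_mkseq.
exists 0%N.
have -> : f 0%N = 0 by apply/eqP; apply: contra_notT h => h; exists 0%N.
exact: II0.
Qed.

Lemma min_size (R : nzRingType) (P : {poly R} -> Prop) :
  (exists q, P q) -> exists q, P q /\ forall q', P q' -> (size q <= size q')%N.
Proof.
move=> [q0 Hq0]; apply: NNPP => Hn.
have key : forall n (q : {poly R}), (size q < n)%N -> ~ P q.
  elim=> [|n IH] q //; rewrite ltnS => lt Pq.
  apply: Hn; exists q; split => // q' Pq'.
  case: (leqP (size q) (size q')) => // lt'.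
  by case: (IH q' (leq_trans lt' lt) Pq').
exact: (key _ q0 (ltnSn _) Hq0).
Qed.

Section NoethPoly.
Variable R : nzRingType.
Hypothesis NR : Noeth R.

Lemma Noeth_poly : Noeth {poly R}.
Proof.
move=> f; apply: NNPP => H.
have H' : forall N, ~ in_ideal (mkseq f N) (f N) by move=> N hN; apply: H; exists N.
pose J q := exists n, in_ideal (mkseq f n) q.
have Jlist : forall l : seq {poly R}, (forall i, (i < size l)%N -> J l`_i) ->
    exists n, forall i, (i < size l)%N -> in_ideal (mkseq f n) l`_i.
  elim=> [|x l IH] hl; first by exists 0%N.
  have [n1 h1] := hl 0%N isT.
  have [n2 h2] : exists n, forall i, (i < size l)%N -> in_ideal (mkseq f n) l`_i.
    by apply: IH => i hi; apply: (hl i.+1).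
  exists (maxn n1 n2) => -[|i] hi /=.
    by apply: in_ideal_mkseq h1; apply: leq_maxl.
  by apply: in_ideal_mkseq (h2 i hi); apply: leq_maxr.
pose Cand l q := J q /\ ~ in_ideal l q.
have Claim1 : forall l, (forall i, (i < size l)%N -> J l`_i) -> exists q, Cand l q.
  move=> l hl; have [n hn] := Jlist l hl.
  exists (f n); split.
    exists n.+1; rewrite -(nth_mkseq 0 f (ltnSn n)); apply: IIgen.
    by rewrite size_mkseq.
  by move=> hin; apply: (H' n); apply: in_ideal_trans hin.
pose MinCand l q := Cand l q /\ forall q', Cand l q' -> (size q <= size q')%N.
pose st l := pickf (MinCand l) 0.
pose gs := fix gs n := if n is n'.+1 then rcons (gs n') (st (gs n')) else [::].
pose g n := st (gs n).
have gsE : forall n, gs n = mkseq g n.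
  by elim=> [|n IH] //=; rewrite mkseqS -IH.
have gMin : forall n, MinCand (mkseq g n) (g n).
  elim/ltn_ind=> n IH; rewrite /g gsE; apply: pickfP; apply: min_size.
  apply: Claim1 => i; rewrite size_mkseq => hi; rewrite nth_mkseq //.
  by have [[]] := IH i hi.
have [N hN] := NR (fun n => lead_coef (g n)).
have gnz : forall i, g i != 0.
  move=> i; apply/eqP => e; have [[_ hc] _] := gMin i; apply: hc; rewrite e.
  exact: II0.
have sz : forall i, (i < N)%N -> (size (g i) <= size (g N))%N.
  move=> i hi; have [_ hm] := gMin i; apply: hm; have [[hJ hc] _] := gMin N.
  by split => // hin; apply: hc; apply: in_ideal_mkseq hin; apply: ltnW.
set d := size (g N).
have d0 : (0 < d)%N by rewrite size_poly_gt0.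
have Claim3 : forall r, in_ideal (mkseq (fun n => lead_coef (g n)) N) r ->
   exists q, [/\ in_ideal (mkseq g N) q, (size q <= d)%N & q`_d.-1 = r].
  move=> r; elim=> [|i hi|a b _ [qa [ia sa ca]] _ [qb [ib sb cb]]|c a _ [qa [ia sa ca]]].
  - by exists 0; split; [exact: II0| rewrite size_poly0 | rewrite coef0].
  - rewrite size_mkseq in hi; rewrite nth_mkseq //.
    have szi := sz i hi; have szi0 : (0 < size (g i))%N by rewrite size_poly_gt0.
    exists ('X^(d - size (g i)) * g i); split.
    + apply: IImul; rewrite -(nth_mkseq 0 g hi); apply: IIgen; rewrite size_mkseq.
      exact: hi.
    + apply/leq_sizeP => j hj; rewrite coefXnM; case: ifP => // _.
      by apply: nth_default; apply: ar1.
    + rewrite coefXnM lead_coefE ifN; last by rewrite -leqNgt; apply: ar2.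
      by rewrite ar3.
  - exists (qa + qb); split; first exact: IIadd.
      by apply: leq_trans (size_polyD _ _) _; rewrite geq_max sa sb.
    by rewrite coefD ca cb.
  - exists (c%:P * qa); split; first exact: IImul.
      by apply: leq_trans (size_polyMleq _ _) _; rewrite size_polyC;
        case: (c != 0) => /=; rewrite ?add0n ?add1n //=; apply: leq_trans sa; apply: leq_pred.
    by rewrite coefCM ca.
have [q [iq sq cq]] := Claim3 _ hN.
set h := g N - q.
have [[JgN ngN] minN] := gMin N.
have Jq : J q.
  have [n hn] := Jlist (mkseq g N) ltac:(move=> i; rewrite size_mkseq => hi;
     rewrite nth_mkseq //; by have [[]] := gMin i).
  by exists n; apply: in_ideal_trans iq.
have Jh : J h.
  have [n1 h1] := JgN; have [n2 h2] := Jq; exists (maxn n1 n2).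
  apply: in_ideal_sub; first by apply: in_ideal_mkseq h1; apply: leq_maxl.
  by apply: in_ideal_mkseq h2; apply: leq_maxr.
have Ch : Cand (mkseq g N) h.
  split => // hin; apply: ngN; have -> : g N = h + q by rewrite /h subrK.
  exact: IIadd.
have := minN h Ch.
have : (size h <= d.-1)%N.
  apply/leq_sizeP => j hj; rewrite leq_eqVlt in hj; case/orP: hj => [/eqP <-|hj].
    by rewrite /h coefB cq lead_coefE subrr.
  apply: nth_default; apply: leq_trans (size_polyD _ _) _; rewrite geq_max size_polyN.
  have hj' : (d <= j)%N by move: hj; case: (d) d0.
  by rewrite hj' (leq_trans sq).
move=> a b; have c := leq_trans b a.
have : (d < d)%N by apply: leq_ltn_trans c _; rewrite prednK.
by rewrite ltnn.
Qed.
End NoethPoly.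

End Sec_H1.

Section Sec_H2.

Section MPoly.
Variable K : fieldType.

Fixpoint mpoly (n : nat) : comNzRingType :=
  match n with 0 => K | n'.+1 => {poly (mpoly n')} end.

Fixpoint mvar (n : nat) : nat -> mpoly n :=
  match n with
  | 0 => fun _ => (0 : K)
  | n'.+1 => fun i => if i == n' then ('X : {poly mpoly n'}) else (mvar n' i)%:P
  end.

Fixpoint mconst (n : nat) : K -> mpoly n :=
  match n with
  | 0 => fun c => c
  | n'.+1 => fun c => (mconst n' c)%:P
  end.

Lemma Noeth_mpoly n : Noeth (mpoly n).
Proof. elim: n => [|n IH] /=; [exact: Noeth_field | exact: Noeth_poly]. Qed.

Lemma mpoly_eval n (v : nat -> K) : exists phi : {rmorphism mpoly n -> K},
  (forall i, (i < n)%N -> phi (mvar n i) = v i) /\ (forall c, phi (mconst n c) = c).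
Proof.
elim: n => [|n [phi [h1 h2]]].
  by exists idfun.
have cfu : commr_rmorph phi (v n) by move=> a; apply: mulrC.
exists (horner_morph cfu); split.
  move=> i hi /=; case: eqP => [->|ne]; first by rewrite horner_morphX.
  rewrite horner_morphC h1 //; by rewrite ltnS leq_eqVlt in hi; case/orP: hi => // /eqP.
by move=> c /=; rewrite horner_morphC h2.
Qed.
End MPoly.

Section Basis.
Variables (K : fieldType) (m : nat).

Fixpoint tp (p : pexpr K 'I_m) : mpoly K m :=
  match p with
  | PVar i => @mvar K m i
  | PConst c => @mconst K m c
  | PAdd a b => tp a + tp b
  | PMul a b => tp a * tp b
  end.

Lemma finite_basis (S : pexpr K 'I_m -> Prop) :
  exists L : seq (pexpr K 'I_m),
    (forall i, (i < size L)%N -> S (nth (PConst 0) L i)) /\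
    (forall v, (forall i, (i < size L)%N -> peval (nth (PConst 0) L i) v = 0) ->
       forall p, S p -> peval p v = 0).
Proof.
have [L [LS LI]] : exists L : seq (pexpr K 'I_m),
    (forall i, (i < size L)%N -> S (nth (PConst 0) L i)) /\
    (forall p, S p -> in_ideal (map tp L) (tp p)).
  apply: NNPP => hn.
  pose st (l : seq (pexpr K 'I_m)) := pickf (fun p => S p /\ ~ in_ideal (map tp l) (tp p)) (PConst 0).
  pose fs := fix fs n := if n is n'.+1 then rcons (fs n') (st (fs n')) else [::].
  pose f n := st (fs n).
  have fsE : forall n, fs n = mkseq f n by elim=> [|n IH] //=; rewrite mkseqS -IH.
  have fP : forall n, S (f n) /\ ~ in_ideal (map tp (mkseq f n)) (tp (f n)).
    elim/ltn_ind=> n IH; rewrite /f fsE /st.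
    apply: (@pickfP _ (fun p => S p /\ ~ in_ideal (map tp (mkseq f n)) (tp p))).
    apply: NNPP => hn2.
    apply: hn; exists (mkseq f n); split.
      by move=> i; rewrite size_mkseq => hi; rewrite nth_mkseq //; case: (IH i hi).
    move=> p Sp; apply: NNPP => hp; apply: hn2; by exists p.
  have [N hN] := @Noeth_mpoly K m (fun n => tp (f n)).
  have [_ hc] := fP N; apply: hc.
  suff -> : map tp (mkseq f N) = mkseq (fun n => tp (f n)) N by [].
  by rewrite /mkseq -map_comp.
exists L; split => // v hv p Sp.
have [phi [h1 h2]] := @mpoly_eval K m (fun i => oapp v 0 (insub i)).
have tpE : forall q, phi (tp q) = peval q v.
  elim=> [i|c|a ha b hb|a ha b hb] /=.
  - by rewrite h1 // valK.
  - by rewrite h2.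
  - by rewrite rmorphD ha hb.
  - by rewrite rmorphM ha hb.
rewrite -tpE; elim: (LI p Sp) => [|i hi|a b _ ha _ hb|r a _ ha].
- by rewrite rmorph0.
- rewrite size_map in hi; rewrite (nth_map (PConst 0)) // tpE; exact: hv.
- by rewrite rmorphD ha hb addr0.
- by rewrite rmorphM ha mulr0.
Qed.
End Basis.

End Sec_H2.

Section Sec_F1.

Section Forms.
Variable K : closedFieldType.
Implicit Types (t : GRing.term K) (f : GRing.formula K) (e : seq K).

Fixpoint tmax t : nat :=
  match t with
  | GRing.Var i => i.+1
  | GRing.Const _ => 0%N
  | GRing.NatConst _ => 0%N
  | GRing.Add a b => maxn (tmax a) (tmax b)
  | GRing.Opp a => tmax a
  | GRing.NatMul a _ => tmax a
  | GRing.Mul a b => maxn (tmax a) (tmax b)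
  | GRing.Inv a => tmax a
  | GRing.Exp a _ => tmax a
  end.

Fixpoint fmax f : nat :=
  match f with
  | GRing.Bool _ => 0%N
  | GRing.Equal a b => maxn (tmax a) (tmax b)
  | GRing.Unit a => tmax a
  | GRing.And a b => maxn (fmax a) (fmax b)
  | GRing.Or a b => maxn (fmax a) (fmax b)
  | GRing.Implies a b => maxn (fmax a) (fmax b)
  | GRing.Not a => fmax a
  | GRing.Exists _ a => fmax a
  | GRing.Forall _ a => fmax a
  end.

Lemma agree_l (a b i : nat) (P : nat -> Prop) :
  (forall j, (j < maxn a b)%N -> P j) -> (i < a)%N -> P i.
Proof. by move=> H h; apply: H; apply: leq_trans h (leq_maxl _ _). Qed.
Lemma agree_r (a b i : nat) (P : nat -> Prop) :
  (forall j, (j < maxn a b)%N -> P j) -> (i < b)%N -> P i.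
Proof. by move=> H h; apply: H; apply: leq_trans h (leq_maxr _ _). Qed.

Lemma eval_agree t e e' : (forall i, (i < tmax t)%N -> e`_i = e'`_i) ->
  GRing.eval e t = GRing.eval e' t.
Proof.
elim: t => //= [i|a ha b hb|a ha|a ha n|a ha b hb|a ha|a ha n] H.
- exact: H.
- by rewrite (ha (fun j => agree_l H)) (hb (fun j => agree_r H)).
- by rewrite ha.
- by rewrite ha.
- by rewrite (ha (fun j => agree_l H)) (hb (fun j => agree_r H)).
- by rewrite ha.
- by rewrite ha.
Qed.

Lemma holds_agree f e e' : (forall i, (i < fmax f)%N -> e`_i = e'`_i) ->
  (GRing.holds e f <-> GRing.holds e' f).
Proof.
elim: f e e' => //= [a b|a|a ha b hb|a ha b hb|a ha b hb|a ha|n a ha|n a ha] e e' H.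
- by rewrite (eval_agree (fun j => agree_l H)) (eval_agree (fun j => agree_r H)).
- by rewrite (eval_agree H).
- by rewrite (ha _ _ (fun j => agree_l H)) (hb _ _ (fun j => agree_r H)).
- by rewrite (ha _ _ (fun j => agree_l H)) (hb _ _ (fun j => agree_r H)).
- by rewrite (ha _ _ (fun j => agree_l H)) (hb _ _ (fun j => agree_r H)).
- by rewrite (ha _ _ H).
- have A : forall x, (GRing.holds (set_nth 0 e n x) a <-> GRing.holds (set_nth 0 e' n x) a).
    by move=> x; apply: ha => j hj; rewrite !nth_set_nth /=; case: eqP => // _; exact: H.
  by split=> -[x hx]; exists x; apply/A.
- have A : forall x, (GRing.holds (set_nth 0 e n x) a <-> GRing.holds (set_nth 0 e' n x) a).
    by move=> x; apply: ha => j hj; rewrite !nth_set_nth /=; case: eqP => // _; exact: H.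
  by split=> hx x; apply/A.
Qed.

Definition holdsV (v : nat -> K) f := GRing.holds (mkseq v (fmax f)) f.
Definition evalV (v : nat -> K) t := GRing.eval (mkseq v (tmax t)) t.

Lemma holdsV_env e v f : (forall i, (i < fmax f)%N -> e`_i = v i) ->
  (GRing.holds e f <-> holdsV v f).
Proof. by move=> H; apply: holds_agree => i hi; rewrite nth_mkseq // H. Qed.

Lemma evalV_env e v t : (forall i, (i < tmax t)%N -> e`_i = v i) ->
  GRing.eval e t = evalV v t.
Proof. by move=> H; apply: eval_agree => i hi; rewrite nth_mkseq // H. Qed.

Lemma holdsV_agree v w f : (forall i, (i < fmax f)%N -> v i = w i) ->
  (holdsV v f <-> holdsV w f).
Proof. by move=> H; apply: holdsV_env => i hi; rewrite nth_mkseq // H. Qed.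

Lemma mkl (v : nat -> K) a b i : (i < a)%N -> (mkseq v (maxn a b))`_i = v i.
Proof. by move=> h; rewrite nth_mkseq //; apply: leq_trans h (leq_maxl _ _). Qed.
Lemma mkr (v : nat -> K) a b i : (i < b)%N -> (mkseq v (maxn a b))`_i = v i.
Proof. by move=> h; rewrite nth_mkseq //; apply: leq_trans h (leq_maxr _ _). Qed.

Lemma holdsV_And v f g : holdsV v (GRing.And f g) <-> holdsV v f /\ holdsV v g.
Proof.
by rewrite /holdsV /= (holdsV_env (fun i => @mkl v (fmax f) (fmax g) i)) (holdsV_env (fun i => @mkr v (fmax f) (fmax g) i)).
Qed.

Lemma holdsV_Not v f : holdsV v (GRing.Not f) <-> ~ holdsV v f.
Proof. by []. Qed.

Lemma holdsV_Bool v b : holdsV v (GRing.Bool b) <-> b.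
Proof. by []. Qed.

Lemma holdsV_Equal v a b : holdsV v (GRing.Equal a b) <-> evalV v a = evalV v b.
Proof.
by rewrite /holdsV /= (evalV_env (fun i => @mkl v (tmax a) (tmax b) i)) (evalV_env (fun i => @mkr v (tmax a) (tmax b) i)).
Qed.

Lemma evalV_Var v (i : nat) : evalV v (GRing.Var K i) = v i.
Proof. by rewrite /evalV /= nth_mkseq. Qed.
Lemma evalV_Const v c : evalV v (GRing.Const c) = c.
Proof. by []. Qed.
Lemma evalV_Add v a b : evalV v (GRing.Add a b) = evalV v a + evalV v b.
Proof.
by rewrite /evalV /= (evalV_env (fun i => @mkl v (tmax a) (tmax b) i)) (evalV_env (fun i => @mkr v (tmax a) (tmax b) i)).
Qed.
Lemma evalV_Mul v a b : evalV v (GRing.Mul a b) = evalV v a * evalV v b.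
Proof.
by rewrite /evalV /= (evalV_env (fun i => @mkl v (tmax a) (tmax b) i)) (evalV_env (fun i => @mkr v (tmax a) (tmax b) i)).
Qed.

Definition exblock f (l : seq nat) := foldr (fun i g => GRing.Exists i g) f l.

Lemma holds_exblock e f l : GRing.holds e (exblock f l) <->
  exists e', (forall i, i \notin l -> e'`_i = e`_i) /\ GRing.holds e' f.
Proof.
elim: l e => [|i l IH] e /=.
  split=> [h|[e' [h1 h2]]]; first by exists e.
  by apply/(holds_agree (e' := e')) => // j _; rewrite h1.
split=> [[x /IH [e' [h1 h2]]]|[e' [h1 h2]]].
  exists e'; split => // j; rewrite in_cons negb_or => /andP[/negPf nj nl].
  by rewrite h1 // nth_set_nth /= nj.
exists e'`_i; apply/IH; exists e'; split => // j nl.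
rewrite nth_set_nth /=; case: eqP => [->|/eqP ne] //.
by apply: h1; rewrite in_cons negb_or ne.
Qed.

End Forms.

End Sec_F1.

Section Sec_F2.

Section OneVar.
Variable K : closedFieldType.

Definition fincof (P : K -> Prop) := exists s : seq K,
  (forall x, P x -> x \in s) \/ (forall x, ~ P x -> x \in s).

Lemma fincof_ext (P Q : K -> Prop) : (forall x, P x <-> Q x) -> fincof P -> fincof Q.
Proof.
move=> H [s [h|h]]; exists s; [left|right] => x hx; apply: h; first by apply/H.
by move=> hp; apply: hx; apply/H.
Qed.

Lemma fincof_not P : fincof P -> fincof (fun x => ~ P x).
Proof.
move=> [s [h|h]]; exists s; [right|left] => x hx; apply: h => //.
by apply: NNPP.
Qed.

Lemma fincof_or P Q : fincof P -> fincof Q -> fincof (fun x => P x \/ Q x).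
Proof.
move=> [s [h|h]] [s' [h'|h']]; exists (s ++ s').
- by left=> x [/h|/h']; rewrite mem_cat => ->; rewrite ?orbT.
- by right=> x hx; rewrite mem_cat h' ?orbT // => q; apply: hx; right.
- by right=> x hx; rewrite mem_cat h // => q; apply: hx; left.
- by right=> x hx; rewrite mem_cat h // => q; apply: hx; left.
Qed.

Lemma fincof_and P Q : fincof P -> fincof Q -> fincof (fun x => P x /\ Q x).
Proof.
move=> hP hQ; have := fincof_not (fincof_or (fincof_not hP) (fincof_not hQ)).
apply: fincof_ext => x; split.
  by move=> hn; split; apply: NNPP => h; apply: hn; [left|right].
by move=> [a b] [].
Qed.

Lemma fincof_poly (p : {poly K}) : fincof (fun x => p.[x] = 0).
Proof.
case: (eqVneq p 0) => [->|pn0].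
  by exists [::]; right => x; rewrite horner0.
have [r hr] := closed_field_poly_normal p.
exists r; left => x hx.
have : root p x by apply/eqP.
rewrite {1}hr rootZ; last by rewrite lead_coef_eq0.
by rewrite root_prod_XsubC.
Qed.

Lemma rterm_poly t e i : GRing.rterm t ->
  exists p : {poly K}, forall x, GRing.eval (set_nth 0 e i x) t = p.[x].
Proof.
elim: t => /= [j|c|n|a ha b hb|a ha|a ha n|a ha b hb|a ha|a ha n] //.
- move=> _; case: (eqVneq j i) => [->|ne].
    by exists 'X => x; rewrite nth_set_nth /= eqxx hornerX.
  by exists (e`_j)%:P => x; rewrite nth_set_nth /= (negPf ne) hornerC.
- by move=> _; exists c%:P => x; rewrite hornerC.
- by move=> _; exists (n%:R)%:P => x; rewrite hornerC.
- move=> /andP[/ha [p hp] /hb [q hq]]; exists (p + q) => x.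
  by rewrite hp hq hornerD.
- move=> /ha [p hp]; exists (- p) => x; by rewrite hp hornerN.
- move=> /ha [p hp]; exists (p *+ n) => x; by rewrite hp hornerMn.
- move=> /andP[/ha [p hp] /hb [q hq]]; exists (p * q) => x.
  by rewrite hp hq hornerM.
- move=> /ha [p hp]; exists (p ^+ n) => x; by rewrite hp horner_exp.
Qed.

Lemma qf_fincof e i (q : GRing.formula K) : GRing.qf_form q -> GRing.rformula q ->
  fincof (fun x => GRing.qf_eval (set_nth 0 e i x) q).
Proof.
elim: q => //= [b|a b|a ha b hb|a ha b hb|a ha b hb|a ha] qf rf.
- by exists [::]; case: b => /=; [right|left] => x.
- case/andP: rf => /(rterm_poly e i) [p hp] /(rterm_poly e i) [q hq].
  apply: (fincof_ext _ (fincof_poly (p - q))) => x.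
  rewrite hornerD hornerN hp hq; split => [/eqP|/eqP ->]; last by rewrite subrr.
  by rewrite subr_eq0.
- case/andP: qf => qa qb; case/andP: rf => ra rb.
  apply: (fincof_ext _ (fincof_and (ha qa ra) (hb qb rb))) => x.
  split; first by case=> h1 h2; apply/andP.
  by move/andP.
- case/andP: qf => qa qb; case/andP: rf => ra rb.
  apply: (fincof_ext _ (fincof_or (ha qa ra) (hb qb rb))) => x.
  split; first by case => h; apply/orP; [left|right].
  by move/orP.
- case/andP: qf => qa qb; case/andP: rf => ra rb.
  apply: (fincof_ext _ (fincof_or (fincof_not (ha qa ra)) (hb qb rb))) => x.
  split; first by case => h; apply/implyP => ha'; [case: h|].
  by case: (GRing.qf_eval _ a) => /= h; [right|left].
- apply: (fincof_ext _ (fincof_not (ha qf rf))) => x.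
  by split => /negP.
Qed.

Lemma formula_fincof (g : GRing.formula K) e i :
  fincof (fun x => GRing.holds (set_nth 0 e i x) g).
Proof.
pose q := GRing.quantifier_elim (@ClosedFieldQE.ex_elim K) (GRing.to_rform g).
have wf := @GRing.quantifier_elim_wf K _ (@ClosedFieldQE.wf_ex_elim K)
   (GRing.to_rform g) (GRing.to_rform_rformula g).
case/andP: wf => qf rf.
apply: (fincof_ext _ (qf_fincof e i qf rf)) => x.
have := @GRing.quantifier_elim_rformP K _ (@ClosedFieldQE.wf_ex_elim K)
   (ClosedFieldQE.holds_ex_elim (@GRing.solve_monicpoly K)) (set_nth 0 e i x)
   (GRing.to_rform g) (GRing.to_rform_rformula g).
move/rwP => <-; exact: GRing.to_rformP.
Qed.

Lemma uncount_avoid : uncountable K -> forall s : nat -> seq K,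
  exists x, forall k, x \notin s k.
Proof.
move=> U s; apply: NNPP => hn.
have H : forall x, exists k, x \in s k.
  move=> x; apply: NNPP => h; apply: hn; exists x => k; apply/negP => hk.
  by apply: h; exists k.
pose kf x := pickf (fun k => x \in s k) 0%N.
have kfP : forall x, x \in s (kf x) by move=> x; apply: (@pickfP _ (fun k => x \in s k)); apply: H.
apply: U; exists (fun x => pickle (kf x, index x (s (kf x)))) => x y /(pcan_inj pickleK) [e1 e2].
by rewrite -(nth_index 0 (kfP x)) e2 e1 nth_index // -e1.
Qed.

Lemma foldr_max_ge (l : seq nat) b a : a \in l -> (a <= foldr maxn b l)%N.
Proof.
elim: l => //= c l IH; rewrite in_cons => /orP[/eqP->|h]; first exact: leq_maxl.
by apply: leq_trans (IH h) (leq_maxr _ _).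
Qed.

Lemma foldr_max_geb (l : seq nat) b : (b <= foldr maxn b l)%N.
Proof. by elim: l => //= c l IH; apply: leq_trans IH (leq_maxr _ _). Qed.

Lemma chain1 (Q : nat -> K -> Prop) : uncountable K ->
  (forall k x, Q k.+1 x -> Q k x) -> (forall k, exists x, Q k x) ->
  (forall k, fincof (Q k)) -> exists x, forall k, Q k x.
Proof.
move=> U dec ne fc.
have mono : forall k k' x, (k <= k')%N -> Q k' x -> Q k x.
  move=> k k' x /subnK <-; elim: (k' - k)%N => [|n IH] //= h.
  by apply: IH; apply: dec.
case: (classic (exists k0 (s0 : seq K), forall x, Q k0 x -> x \in s0)).
  move=> [k0 [s0 hs0]]; apply: NNPP => hn.
  have H : forall x, exists k, ~ Q k x.
    move=> x; apply: NNPP => h; apply: hn; exists x => k; apply: NNPP => hk.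
    by apply: h; exists k.
  pose kf x := pickf (fun k => ~ Q k x) 0%N.
  have kfP : forall x, ~ Q (kf x) x by move=> x; apply: (@pickfP _ (fun k => ~ Q k x)); apply: H.
  pose K0 := foldr maxn k0 (map kf s0).
  have [x hx] := ne K0.
  have xs : x \in s0 by apply: hs0; apply: mono hx; apply: foldr_max_geb.
  apply: (kfP x); apply: mono hx; apply: foldr_max_ge; exact: map_f.
move=> nA.
have H : forall k, exists s : seq K, forall x, ~ Q k x -> x \in s.
  move=> k; have [s [h|h]] := fc k; last by exists s.
  by case: nA; exists k, s.
pose sk k := pickf (fun s : seq K => forall x, ~ Q k x -> x \in s) [::].
have skP : forall k x, ~ Q k x -> x \in sk k by move=> k; apply: (@pickfP _ (fun s : seq K => forall x, ~ Q k x -> x \in s)); apply: H.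
have [x hx] := uncount_avoid U sk.
exists x => k; apply: NNPP => h; by move: (hx k); rewrite skP.
Qed.

End OneVar.

End Sec_F2.

Section Sec_F3.

Lemma set_nth_size (T : Type) (x0 : T) (s : seq T) x : set_nth x0 s (size s) x = rcons s x.
Proof. by elim: s => //= a s ->. Qed.

Lemma mem_iota_ex j b i : (i \in iota j.+1 (b - j.+1)) = (j < i)%N && (i < b)%N.
Proof.
rewrite mem_iota; case: (ltnP j i) => //= h.
case: (leqP j.+1 b) => hb; first by rewrite subnKC.
rewrite (_ : (b - j.+1 = 0)%N); last by apply/eqP; rewrite subn_eq0 ltnW.
rewrite addn0; rewrite ltnS in hb.
by rewrite ltnNge h ltnNge (leq_trans hb (ltnW h)).
Qed.

Section Chain.
Variable K : closedFieldType.

Lemma chainV (f : nat -> GRing.formula K) : uncountable K ->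
  (forall k v, holdsV v (f k.+1) -> holdsV v (f k)) ->
  (forall k, exists v, holdsV v (f k)) ->
  exists v, forall k, holdsV v (f k).
Proof.
move=> U dec ne.
pose Inv (s : seq K) := forall k, exists v : nat -> K,
   (forall i, (i < size s)%N -> v i = s`_i) /\ holdsV v (f k).
have step : forall s, Inv s -> exists x, Inv (rcons s x).
  move=> s hs; set j := size s.
  pose Q k x := exists v : nat -> K,
     (forall i, (i < j.+1)%N -> v i = (rcons s x)`_i) /\ holdsV v (f k).
  have [x hx] : exists x, forall k, Q k x.
    apply: chain1 => //.
    - by move=> k x [v [h1 h2]]; exists v; split => //; apply: dec.
    - move=> k; have [v [h1 h2]] := hs k; exists (v j), v; split => // i hi.
      rewrite nth_rcons -/j; case: ltnP => hij; first exact: h1.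
      have -> : i = j by apply/eqP; rewrite eqn_leq hij andbT -ltnS.
      by rewrite eqxx.
    - move=> k; pose b := fmax (f k).
      apply: (fincof_ext _ (formula_fincof (exblock (f k) (iota j.+1 (b - j.+1))) s j)).
      move=> x; rewrite set_nth_size holds_exblock; split.
        move=> [e' [h1 h2]]; exists (fun i => e'`_i); split.
          move=> i hi; apply: h1; rewrite mem_iota_ex; apply/negP => /andP[a _].
          by move: hi; rewrite ltnS leqNgt a.
        by apply/(holdsV_env (e := e')).
      move=> [v [h1 h2]].
      pose E0 := rcons s x.
      exists (mkseq (fun i => if (j < i)%N && (i < b)%N then v i else E0`_i) (maxn (size E0) b)).
      split.
        move=> i; rewrite mem_iota_ex => /negPf hi.
        case: (ltnP i (maxn (size E0) b)) => hm; first by rewrite nth_mkseq // hi.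
        rewrite !nth_default // ?size_mkseq //.
        by apply: leq_trans hm; apply: leq_maxl.
      apply/holdsV_env; last exact: h2.
      move=> i hi; rewrite nth_mkseq; last by apply: leq_trans hi (leq_maxr _ _).
      rewrite hi andbT; case: ltnP => // hij; rewrite h1 //.
  exists x => k; have [v [h1 h2]] := hx k; exists v; split => //.
  by move=> i; rewrite size_rcons; apply: h1.
pose st s := pickf (fun x => Inv (rcons s x)) 0.
pose gs := fix gs n := if n is n'.+1 then rcons (gs n') (st (gs n')) else [::].
pose v n := st (gs n).
have gsE : forall n, gs n = mkseq v n by elim=> [|n IH] //=; rewrite mkseqS -IH.
have gI : forall n, Inv (gs n).
  elim=> [|n IH] /=.
    by move=> k; have [v0 h] := ne k; exists v0.
  by apply: (@pickfP _ (fun x => Inv (rcons (gs n) x))); apply: step.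
exists v => k; have [w [h1 h2]] := gI (fmax (f k)) k.
apply/(holdsV_agree (w := w)) => // i hi.
by rewrite h1 gsE ?size_mkseq // nth_mkseq.
Qed.
End Chain.

End Sec_F3.

Section Sec_C1.

Section Trm.
Variable K : closedFieldType.

Fixpoint trm (V : Type) (s : V -> nat) (p : pexpr K V) : GRing.term K :=
  match p with
  | PVar a => GRing.Var K (s a)
  | PConst c => GRing.Const c
  | PAdd a b => GRing.Add (trm s a) (trm s b)
  | PMul a b => GRing.Mul (trm s a) (trm s b)
  end.

Lemma evalV_trm (V : Type) (s : V -> nat) (p : pexpr K V) v :
  evalV v (trm s p) = peval p (fun a => v (s a)).
Proof.
elim: p => [a|c|a ha b hb|a ha b hb] /=.
- exact: evalV_Var.
- exact: evalV_Const.
- by rewrite evalV_Add ha hb.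
- by rewrite evalV_Mul ha hb.
Qed.

Definition bigAnd (T : Type) (l : seq T) (F : T -> GRing.formula K) :=
  foldr (fun x acc => GRing.And (F x) acc) (GRing.Bool true) l.

Lemma holdsV_bigAnd (T : eqType) (l : seq T) F v :
  holdsV v (bigAnd l F) <-> (forall x, x \in l -> holdsV v (F x)).
Proof.
elim: l => [|a l IH] /=; first by split.
rewrite holdsV_And IH; split.
  by move=> [h1 h2] x; rewrite in_cons => /orP[/eqP->|/h2].
by move=> h; split; [apply: h; rewrite mem_head | move=> x hx; apply: h; rewrite in_cons hx orbT].
Qed.
End Trm.

Lemma sig_eq (T : Type) (P : T -> Prop) (a b : {x | P x}) : proj1_sig a = proj1_sig b -> a = b.
Proof. case: a b => [a pa] [b pb] /= e; subst b; f_equal; apply: proof_irrelevance. Qed.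

Section Rev.
Variables (G : group) (A : Type) (tau : (G -> A) -> (G -> A)).

Lemma rev_of_KC k (M : 'I_k -> G) mu : local_rule tau M mu -> bijective tau ->
  (exists k' (N : 'I_k' -> G), forall x y, (forall i, tau x (N i) = tau y (N i)) ->
     x (gone G) = y (gone G)) -> reversible tau.
Proof.
move=> hloc bij [k' [N KC]]; split => //.
case: bij => sigma h1 h2; exists sigma; split => //; split => //.
pose shift (h : G) (x : G -> A) := fun g => x (gmul h g).
have equiv : forall h x, tau (shift h x) = shift h (tau x).
  move=> h x; apply: functional_extensionality => g; rewrite /shift !hloc.
  congr mu; apply: functional_extensionality => i; by rewrite /restr_shift gmulA.
pose N' (i : 'I_k'.+1) := oapp N (gone G) (unlift ord0 i).
pose P (u : 'I_k'.+1 -> A) (x : G -> A) := forall j, tau x (N j) = u (lift ord0 j).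
exists k'.+1, N', (fun u => pickf (P u) (fun _ => u ord0) (gone G)) => y g.
set u := restr_shift N' y g.
have ex : exists x, P u x.
  exists (shift g (sigma y)) => j; rewrite equiv h2 /u /restr_shift /shift /N'.
  by rewrite liftK.
have := @pickfP _ (P u) (fun _ => u ord0) ex.
set x' := pickf _ _ => hx'.
rewrite (KC x' (shift g (sigma y))) /shift ?gmul1r //.
by move=> i; rewrite hx' equiv h2 /u /restr_shift /shift /N' liftK.
Qed.
End Rev.

End Sec_C1.

Section Sec_C2.

Section Main.
Variables (G : group) (K : closedFieldType) (m : nat) (S : pexpr K 'I_m -> Prop).
Variable tau : (G -> aff_set S) -> (G -> aff_set S).
Variables (k : nat) (M : 'I_k -> G) (mu : ('I_k -> aff_set S) -> aff_set S).
Hypothesis hloc : local_rule tau M mu.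
Variable F : 'I_m -> pexpr K ('I_k * 'I_m).
Hypothesis hF : forall (u : 'I_k -> aff_set S) (j : 'I_m),
      proj1_sig (mu u) j = peval (F j) (fun ij => proj1_sig (u ij.1) ij.2).
Hypothesis U : uncountable K.
Hypothesis inj : injective tau.
Variable L : seq (pexpr K 'I_m).
Hypothesis LS : forall i, (i < size L)%N -> S (nth (PConst 0) L i).
Hypothesis LI : forall v, (forall i, (i < size L)%N -> peval (nth (PConst 0) L i) v = 0) ->
       forall p, S p -> peval p v = 0.

Definition word := seq ('I_k * bool).
Definition W (n : nat) : word := odflt [::] (unpickle n).
Definition code (w : word) : nat := pickle w.
Lemma W_code w : W (code w) = w.
Proof. by rewrite /W /code pickleK. Qed.
Definition letter (l : 'I_k * bool) : G := if l.2 then M l.1 else ginv (M l.1).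
Definition geval (w : word) : G := foldl (fun g l => gmul g (letter l)) (gone G) w.
Lemma geval_rcons w l : geval (rcons w l) = gmul (geval w) (letter l).
Proof. by rewrite /geval -cats1 foldl_cat. Qed.

Definition idx (n : nat) (b : bool) (j : 'I_m) : nat := pickle (n, b, j).

Definition fA n : GRing.formula K :=
  bigAnd (iota 0 (size L)) (fun i => bigAnd [:: false; true] (fun b =>
    GRing.Equal (trm (fun j => idx n b j) (nth (PConst 0) L i)) (GRing.Const 0))).
Definition fB n : GRing.formula K :=
  bigAnd (iota 0 n.+1) (fun n' =>
    if excluded_middle_informative (geval (W n) = geval (W n')) then
      bigAnd (enum 'I_m) (fun j => bigAnd [:: false; true] (fun b =>
        GRing.Equal (GRing.Var K (idx n b j)) (GRing.Var K (idx n' b j))))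
    else GRing.Bool true).
Definition cl n (b : bool) (ij : 'I_k * 'I_m) := idx (code (rcons (W n) (ij.1, true))) b ij.2.
Definition fC n : GRing.formula K :=
  bigAnd (enum 'I_m) (fun j =>
    GRing.Equal (trm (cl n false) (F j)) (trm (cl n true) (F j))).
Definition fD : GRing.formula K :=
  GRing.Not (bigAnd (enum 'I_m) (fun j =>
    GRing.Equal (GRing.Var K (idx (code [::]) false j)) (GRing.Var K (idx (code [::]) true j)))).
Definition phi n := GRing.And (fA n) (GRing.And (fB n) (fC n)).
Fixpoint Phi (n : nat) : GRing.formula K :=
  if n is n'.+1 then GRing.And (Phi n') (phi n) else GRing.And fD (phi 0).

Lemma PhiE v n : holdsV v (Phi n) <-> holdsV v fD /\ forall n', (n' <= n)%N -> holdsV v (phi n').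
Proof.
elim: n => [|n IH] /=; rewrite holdsV_And.
  split=> [[h1 h2]|[h1 h2]]; split => //; last exact: h2.
  by move=> n'; rewrite leqn0 => /eqP->.
rewrite IH; split=> [[[h1 h2] h3]|[h1 h2]]; split => //.
  by move=> n'; rewrite leq_eqVlt => /orP[/eqP->|]; [|rewrite ltnS; apply: h2].
  by split => // n' hn'; apply: h2; apply: leq_trans hn' (leqnSn _).
by apply: h2.
Qed.

Lemma fA_spec v n : holdsV v (fA n) <-> forall b i, (i < size L)%N ->
   peval (nth (PConst 0) L i) (fun j => v (idx n b j)) = 0.
Proof.
rewrite holdsV_bigAnd; split.
  move=> h b i hi; have := h i; rewrite mem_iota add0n hi => /(_ isT).
  move/holdsV_bigAnd => /(_ b); rewrite !in_cons in_nil orbF.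
  by case: b => /= /(_ isT) /holdsV_Equal; rewrite evalV_trm.
move=> h i; rewrite mem_iota add0n => hi; apply/holdsV_bigAnd => b _.
by apply/holdsV_Equal; rewrite evalV_trm h.
Qed.

Lemma fB_spec v n : holdsV v (fB n) <-> forall n', (n' <= n)%N -> geval (W n) = geval (W n') ->
   forall b j, v (idx n b j) = v (idx n' b j).
Proof.
rewrite holdsV_bigAnd; split.
  move=> h n' hn' e b j; have := h n'; rewrite mem_iota add0n ltnS hn' => /(_ isT).
  case: excluded_middle_informative => // _ /holdsV_bigAnd /(_ j (mem_enum _ _)).
  move/holdsV_bigAnd => /(_ b); rewrite !in_cons in_nil orbF.
  by case: b => /= /(_ isT) /holdsV_Equal; rewrite !evalV_Var.
move=> h n'; rewrite mem_iota add0n ltnS => hn'.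
case: excluded_middle_informative => e; last by [].
apply/holdsV_bigAnd => j _; apply/holdsV_bigAnd => b _.
by apply/holdsV_Equal; rewrite !evalV_Var (h n' hn' e).
Qed.

Lemma fC_spec v n : holdsV v (fC n) <-> forall j,
   peval (F j) (fun ij => v (cl n false ij)) = peval (F j) (fun ij => v (cl n true ij)).
Proof.
rewrite holdsV_bigAnd; split.
  by move=> h j; move: (h j (mem_enum _ _)) => /holdsV_Equal; rewrite !evalV_trm.
by move=> h j _; apply/holdsV_Equal; rewrite !evalV_trm.
Qed.

Lemma fD_spec v : holdsV v fD <-> ~ forall j, v (idx (code [::]) false j) = v (idx (code [::]) true j).
Proof.
rewrite holdsV_Not holdsV_bigAnd; split=> h1 h2; apply: h1.
  by move=> j _; apply/holdsV_Equal; rewrite !evalV_Var.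
by move=> j; move: (h2 j (mem_enum _ _)) => /holdsV_Equal; rewrite !evalV_Var.
Qed.

Lemma KC : exists k' (N : 'I_k' -> G), forall x y, (forall i, tau x (N i) = tau y (N i)) ->
     x (gone G) = y (gone G).
Proof.
apply: NNPP => nKC.
have nK : forall k' (N : 'I_k' -> G), exists x y, (forall i, tau x (N i) = tau y (N i)) /\
    x (gone G) <> y (gone G).
  move=> k' N; apply: NNPP => h; apply: nKC; exists k', N => x y hxy.
  apply: NNPP => ne; apply: h; by exists x, y.
have ne : forall n, exists v, holdsV v (Phi n).
  move=> n; have [x [y [hxy hne]]] := nK n.+1 (fun i => geval (W i)).
  pose h (t : nat) : K := match (unpickle t : option (nat * bool * 'I_m)) with
    | Some (n, b, j) => proj1_sig ((if b then y else x) (geval (W n))) j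
    | None => 0 end.
  have hE : forall n b j, h (idx n b j) = proj1_sig ((if b then y else x) (geval (W n))) j.
    by move=> n' b j; rewrite /h /idx pickleK.
  exists h; apply/PhiE; split.
    apply/fD_spec => hall; apply: hne; apply: sig_eq.
    apply: functional_extensionality => j; move: (hall j); rewrite !hE W_code.
    by [].
  move=> n' hn'; apply/holdsV_And; split; last apply/holdsV_And; [|split].
  - apply/fA_spec => b i hi.
    rewrite (_ : (fun j => h (idx n' b j)) = proj1_sig ((if b then y else x) (geval (W n')))).
      by apply: (proj2_sig ((if b then y else x) (geval (W n')))); apply: LS.
    by apply: functional_extensionality => j; rewrite hE.
  - by apply/fB_spec => n'' _ e b j; rewrite !hE e.
  - apply/fC_spec => j.
    have key : forall z : G -> aff_set S, (fun ij => proj1_sig (z (geval (rcons (W n') (ij.1, true)))) ij.2)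
        = (fun ij : 'I_k * 'I_m => proj1_sig (restr_shift M z (geval (W n')) ij.1) ij.2).
      by move=> z; apply: functional_extensionality => ij; rewrite geval_rcons.
    rewrite (_ : (fun ij => h (cl n' false ij)) = (fun ij => proj1_sig (x (geval (rcons (W n') (ij.1, true)))) ij.2)); last first.
      by apply: functional_extensionality => ij; rewrite /cl hE W_code.
    rewrite (_ : (fun ij => h (cl n' true ij)) = (fun ij => proj1_sig (y (geval (rcons (W n') (ij.1, true)))) ij.2)); last first.
      by apply: functional_extensionality => ij; rewrite /cl hE W_code.
    rewrite !key -!hF -!hloc.
    by have := hxy (Ordinal (n := n.+1) (m := n') hn'); move=> ->.
have [v hv] := @chainV K Phi U (fun n v h => proj1 (proj1 (holdsV_And v (Phi n) (phi n.+1)) h)) ne.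
have hD : holdsV v fD by have := hv 0%N; case/PhiE.
have hphi : forall n, holdsV v (phi n).
  by move=> n; have := hv n; case/PhiE => _; apply.
have hA : forall n, holdsV v (fA n) by move=> n; have /holdsV_And [] := hphi n.
have hB : forall n, holdsV v (fB n) by move=> n; have /holdsV_And [_ /holdsV_And []] := hphi n.
have hC : forall n, holdsV v (fC n) by move=> n; have /holdsV_And [_ /holdsV_And []] := hphi n.
pose pv n b : 'I_m -> K := fun j => v (idx n b j).
have inA : forall n b p, S p -> peval p (pv n b) = 0.
  by move=> n b; apply: LI => i hi; have /fA_spec := hA n; apply.
pose pt n b : aff_set S := exist _ (pv n b) (inA n b).
have ptE : forall n n' b, geval (W n) = geval (W n') -> pt n b = pt n' b.
  move=> n n' b e; apply: sig_eq; apply: functional_extensionality => j /=.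
  case: (leqP n' n) => hn.
    by have /fB_spec := hB n; apply.
  by symmetry; have /fB_spec := hB n'; apply => //; apply: ltnW.
pose inH (g : G) := exists n, geval (W n) = g.
pose xy (b : bool) (g : G) : aff_set S :=
  match excluded_middle_informative (inH g) with
  | left h => pt (proj1_sig (constructive_indefinite_description _ h)) b
  | right _ => pt (code [::]) false end.
have xyE : forall b g n, geval (W n) = g -> xy b g = pt n b.
  move=> b g n e; rewrite /xy; case: excluded_middle_informative => [h|hn].
    by apply: ptE; rewrite e; exact: (proj2_sig (constructive_indefinite_description _ h)).
  by case: hn; exists n.
have xyN : forall b g, ~ inH g -> xy b g = pt (code [::]) false.
  by move=> b g hn; rewrite /xy; case: excluded_middle_informative.
have txy : tau (xy false) = tau (xy true).
  apply: functional_extensionality => g; rewrite !hloc.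
  case: (classic (inH g)) => hg.
    have [n en] := hg.
    have gi : forall i, geval (W (code (rcons (W n) (i, true)))) = gmul g (M i).
      by move=> i; rewrite W_code geval_rcons en.
    have ex : forall b, restr_shift M (xy b) g = fun i => pt (code (rcons (W n) (i, true))) b.
      by move=> b; apply: functional_extensionality => i; rewrite /restr_shift (xyE _ _ _ (gi i)).
    rewrite !ex.
    apply: sig_eq; apply: functional_extensionality => j; rewrite !hF /=.
    by have /fC_spec := hC n; apply.
  have nh : forall i, ~ inH (gmul g (M i)).
    move=> i [n' e]; apply: hg; exists (code (rcons (W n') (i, false))).
    by rewrite W_code geval_rcons e /letter /= -gmulA gmulVr gmul1r.
  congr mu; apply: functional_extensionality => i; rewrite /restr_shift.
  by rewrite !xyN //; apply: nh.
have exy := inj txy.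
have e0 : geval (W (code [::])) = gone G by rewrite W_code.
have := congr1 (fun z => proj1_sig (z (gone G))) exy.
rewrite (xyE _ _ _ e0) (xyE _ _ _ e0) /= => e.
move/fD_spec: hD; apply => j; exact: (congr1 (fun f => f j) e).
Qed.
End Main.

End Sec_C2.

Theorem theorem1p3 (G : group) (K : closedFieldType) (m : nat)
  (S : pexpr K 'I_m -> Prop)
  (tau : (G -> aff_set S) -> (G -> aff_set S)) :
  uncountable K -> algebraic_CA tau -> bijective tau -> reversible tau.
Proof.
move=> U [k [M [mu [hloc [F hF]]]]] bij.
have [L [LS LI]] := finite_basis S.
apply: (rev_of_KC hloc bij).
exact: (@KC G K m S tau k M mu hloc F hF U (bij_inj bij) L LS LI).
Qed.
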